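(* Let $X, Y$ be Polish spaces equipped with Borel probability measures $\mu$ and $\nu$, and let $c: X\times Y\to[0,\infty]$ be Borel measurable. Then $P^{\mathrm{rel}}\ge D$.
   Context: For $0\le\varepsilon\le1$, let $\Pi^{\varepsilon}(\mu,\nu)$ be the set of non-negative Borel measures $\pi$ on $X\times Y$ with total mass $\pi(X\times Y)\ge 1-\varepsilon$ whose marginals satisfy $p_X(\pi)\le\mu$ and $p_Y(\pi)\le\nu$. Set $P^{\varepsilon}=\inf\{\int c\,d\pi : \pi\in\Pi^{\varepsilon}(\mu,\nu)\}$ and $P^{\mathrm{rel}}=\lim_{\varepsilon\to0}P^{\varepsilon}$. Let $D=\sup\{\int_X\varphi\,d\mu+\int_Y\psi\,d\nu\}$, where the supremum runs over all $\mu$-integrable $\varphi:X\to[-\infty,\infty)$ and $\nu$-integrable $\psi:Y\to[-\infty,\infty)$ with $\varphi(x)+\psi(y)\le c(x,y)$ for all $(x,y)\in X\times Y$. *)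

(* Defs.v *)
From HB Require Import structures.
From mathcomp Require Import all_boot all_order all_algebra.
From mathcomp Require Import all_classical all_reals all_analysis.
From mathcomp Require Import measurable_realfun.
Set Implicit Arguments. Unset Strict Implicit. Unset Printing Implicit Defensive.
Import Order.TTheory GRing.Theory Num.Theory.
Local Open Scope classical_set_scope.
Local Open Scope ring_scope.

(* A Polish space, presented through a compatible complete metric:
   a complete (pseudo)metric space which is Hausdorff (hence metric)
   and separable (has a countable dense subset). *)
Definition polish (R : realType) (T : completePseudoMetricType R) : Prop :=
  hausdorff_space T /\ exists S : set T, countable S /\ dense S.

Notation Borel T := (g_sigma_algebraType (@open T)).

Local Open Scope ereal_scope.

Section OT.
Context {R : realType} {dX dY : measure_display}
  {X : measurableType dX} {Y : measurableType dY}.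

Definition PiEps (mu : {measure set X -> \bar R}) (nu : {measure set Y -> \bar R})
  (eps : R) : set {measure set (X * Y)%type -> \bar R} :=
  [set pi | (1 - eps)%:E <= pi setT /\
     (forall A : set X, measurable A -> pi (A `*` setT) <= mu A) /\
     (forall B : set Y, measurable B -> pi (setT `*` B) <= nu B)].

Definition Peps (mu : {measure set X -> \bar R}) (nu : {measure set Y -> \bar R})
  (c : (X * Y)%type -> \bar R) (eps : R) : \bar R :=
  ereal_inf [set \int[pi]_z c z | pi in PiEps mu nu eps].

Definition Prel (mu : {measure set X -> \bar R}) (nu : {measure set Y -> \bar R})
  (c : (X * Y)%type -> \bar R) : \bar R :=
  lim (Peps mu nu c eps @[eps --> 0^'+]).

Definition Dual (mu : {measure set X -> \bar R}) (nu : {measure set Y -> \bar R})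
  (c : (X * Y)%type -> \bar R) : \bar R :=
  ereal_sup [set r | exists (phi : X -> \bar R) (psi : Y -> \bar R),
     [/\ mu.-integrable setT phi /\ (forall x, phi x != +oo),
         nu.-integrable setT psi /\ (forall y, psi y != +oo),
         (forall x y, phi x + psi y <= c (x, y)) &
         r = \int[mu]_x phi x + \int[nu]_y psi y]].
End OT.

(* Main.v *)
Require Import Defs.
From HB Require Import structures.
From mathcomp Require Import all_boot all_order all_algebra.
From mathcomp Require Import all_classical all_reals all_analysis.
From mathcomp Require Import measurable_realfun.
From mathcomp Require Import lra.
Import Order.TTheory GRing.Theory Num.Theory.
Local Open Scope classical_set_scope.
Local Open Scope ring_scope.
Local Open Scope ereal_scope.
Section Marg.
Context (R : realType) d (T : measurableType d) (mu : {measure set T -> \bar R}).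
Variable m : {measure set T -> \bar R}.
Hypotheses (mu1 : mu setT = 1) (mle : forall A, measurable A -> m A <= mu A).

Lemma marg_integrable f : mu.-integrable setT f -> m.-integrable setT f.
Proof.
move=> /integrableP [mf fi]; apply/integrableP; split => //.
apply: le_lt_trans fi; apply: ge0_le_measure_integral => //.
exact: measurableT_comp.
Qed.

Lemma trunc_lb f (M eps : R) : (0 <= M)%R -> (1 - eps)%:E <= m setT ->
  mu.-integrable setT f ->
  \int[mu]_x mine (f^\+ x) M%:E - (M * eps)%:E - \int[mu]_x f^\- x <= \int[m]_x f x.
Proof.
move=> M0 meps intf.
have mf : measurable_fun setT f by case/integrableP: intf.
set h := fun x => mine (f^\+ x) M%:E.
have h0 x : 0 <= h x by rewrite /h le_min lee_fin M0 andbT.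
have hM x : h x <= M%:E by rewrite /h ge_min lexx orbT.
have hfin x : h x \is a fin_num by rewrite ge0_fin_numE// (le_lt_trans (hM x)) ?ltey.
have mh : measurable_fun setT h.
  by apply: measurable_mine; [exact: measurable_funepos|exact: measurable_cst].
set g := fun x => M%:E - h x.
have g0 x : 0 <= g x by rewrite /g subre_ge0.
have mg : measurable_fun setT g.
  by apply: emeasurable_funB => //; exact: measurable_cst.
have hg x : h x + g x = M%:E by rewrite /g addeC subeK.
have mT : m setT <= 1 by rewrite -mu1 mle.
have m0 : 0 <= m setT by [].
have Em : \int[m]_x h x + \int[m]_x g x = M%:E * m setT.
  by rewrite -ge0_integralD//; under eq_integral do rewrite hg; rewrite integral_cst.
have Emu : \int[mu]_x h x + \int[mu]_x g x = M%:E.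
  by rewrite -ge0_integralD//; under eq_integral do rewrite hg; rewrite integral_cst// mu1 mule1.
have gle : \int[m]_x g x <= \int[mu]_x g x by exact: ge0_le_measure_integral.
have hle : \int[m]_x h x <= \int[m]_x f^\+ x.
  apply: ge0_le_integral => //; first exact: measurable_funepos.
  by move=> x _; rewrite /h ge_min lexx.
have nle : \int[m]_x f^\- x <= \int[mu]_x f^\- x.
  apply: ge0_le_measure_integral => //; exact: measurable_funeneg.
rewrite [leRHS]integralE; apply: leeB => //.
apply: le_trans hle.
have mfin : m setT \is a fin_num by rewrite ge0_fin_numE// (le_lt_trans mT) ?ltey.
have /andP[f1 f2] : (\int[m]_x h x \is a fin_num) && (\int[m]_x g x \is a fin_num).
  by rewrite -fin_numD Em fin_numM.
have /andP[f3 f4] : (\int[mu]_x h x \is a fin_num) && (\int[mu]_x g x \is a fin_num).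
  by rewrite -fin_numD Emu.
move: Em Emu gle meps mT.
rewrite -(fineK f1) -(fineK f2) -(fineK f3) -(fineK f4) -(fineK mfin).
move: (fine _) (fine _) (fine _) (fine _) (fine _) => a1 a2 a3 a4 a5.
rewrite -!EFinD -EFinM !lee_fin => -[E1] [E2] H1 H2 H3.
nra.
Qed.

Lemma trunc_sup f (dl : R) : (0 < dl)%R -> mu.-integrable setT f ->
  (forall x, f x != +oo) ->
  exists n : nat, \int[mu]_x f^\+ x - dl%:E < \int[mu]_x mine (f^\+ x) n%:R%:E.
Proof.
move=> d0 intf fnoo.
have mf : measurable_fun setT f by case/integrableP: intf.
pose u := fun (n : nat) x => mine (f^\+ x) n%:R%:E.
have mu_ n : measurable_fun setT (u n).
  by apply: measurable_mine; [exact: measurable_funepos|exact: measurable_cst].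
have u0 n x : setT x -> 0 <= u n x by move=> _; rewrite /u le_min lee_fin ler0n andbT.
have ndu x : setT x -> {homo u^~ x : n k / (n <= k)%N >-> n <= k}.
  by move=> _ n k nk; rewrite /u le_min !ge_min lexx /= lee_fin ler_nat nk orbT.
have up x : limn (u^~ x) = f^\+ x.
  apply/cvg_lim => //; apply: cvg_near_cst.
  have fin : f^\+ x \is a fin_num.
    by rewrite ge0_fin_numE// funeposE gt_max ltey fnoo ltry.
  exists (Num.Def.archi_bound (fine (f^\+ x))) => // k /= Nk.
  rewrite /u; apply/min_idPl; rewrite -(fineK fin) lee_fin.
  apply: le_trans (ltW (archi_boundP _)) _; first exact: fine_ge0.
  by rewrite ler_nat.
have MCT : \int[mu]_x f^\+ x = limn (fun n => \int[mu]_x u n x).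
  rewrite -(monotone_convergence mu measurableT mu_ u0 ndu).
  by apply: eq_integral => x _; rewrite up.
have ndI : {homo (fun n => \int[mu]_x u n x) : n k / (n <= k)%N >-> n <= k}.
  move=> n k nk; apply: ge0_le_integral => // x _; [exact: u0|exact: (ndu x I n k nk)].
rewrite (cvg_lim _ (ereal_nondecreasing_cvgn ndI)) // in MCT.
have fin := integrable_pos_fin_num measurableT intf.
have : \int[mu]_x f^\+ x - dl%:E < ereal_sup (range (fun n => \int[mu]_x u n x)).
  by rewrite -MCT -(fineK fin) -EFinB lte_fin ltrBlDr ltrDl.
by move=> /ereal_sup_gt [y [n _ <-] lt]; exists n.
Qed.
End Marg.

Lemma marg_main (R : realType) d (T : measurableType d) (mu : {measure set T -> \bar R})
  (mu1 : mu setT = 1) f (dl : R) : (0 < dl)%R -> mu.-integrable setT f ->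
  (forall x, f x != +oo) ->
  exists M : R, (0 <= M)%R /\ forall (m : {measure set T -> \bar R}) (eps : R),
    (forall A, measurable A -> m A <= mu A) -> (1 - eps)%:E <= m setT ->
    m.-integrable setT f /\
    \int[mu]_x f x - dl%:E - (M * eps)%:E <= \int[m]_x f x.
Proof.
move=> d0 intf fnoo.
have mf : measurable_fun setT f by case/integrableP: intf.
have [n hn] := @trunc_sup _ _ _ mu f dl d0 intf fnoo.
exists n%:R; split; first exact: ler0n.
move=> m eps mle meps; split; first exact: (@marg_integrable _ _ _ mu m mle f intf).
apply: le_trans (@trunc_lb _ _ _ mu m mu1 mle f n%:R eps (ler0n _ n) meps intf).
have fp := integrable_pos_fin_num measurableT intf.
have fn := integrable_neg_fin_num measurableT intf.
have fh : \int[mu]_x mine (f^\+ x) n%:R%:E \is a fin_num.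
  rewrite ge0_fin_numE; last by apply: integral_ge0 => x _; rewrite le_min lee_fin ler0n andbT.
  apply: le_lt_trans (_ : \int[mu]_x f^\+ x < +oo); last by rewrite ltey_eq fp.
  apply: ge0_le_integral => //.
  - by move=> x _; rewrite le_min lee_fin ler0n andbT.
  - by apply: measurable_mine; [exact: measurable_funepos|exact: measurable_cst].
  - exact: measurable_funepos.
  - by move=> x _; rewrite ge_min lexx.
move: hn; rewrite [\int[mu]_x f x]integralE -(fineK fp) -(fineK fn) -(fineK fh).
move: (fine _) (fine _) (fine _) => a1 a2 a3.
rewrite -!EFinB !lte_fin !lee_fin; lra.
Qed.

Definition margX {R : realType} {d1 d2} {X : measurableType d1} {Y : measurableType d2}
  (pi : {measure set (X*Y)%type -> \bar R}) : {measure set X -> \bar R} :=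
  ltac:(refine (pushforward pi fst : measure X R); exact: measurable_fst).
Definition margY {R : realType} {d1 d2} {X : measurableType d1} {Y : measurableType d2}
  (pi : {measure set (X*Y)%type -> \bar R}) : {measure set Y -> \bar R} :=
  ltac:(refine (pushforward pi snd : measure Y R); exact: measurable_snd).

Lemma margXE (R : realType) d1 d2 (X : measurableType d1) (Y : measurableType d2)
  (pi : {measure set (X*Y)%type -> \bar R}) A : margX pi A = pi (A `*` setT).
Proof. by rewrite setXT. Qed.
Lemma margYE (R : realType) d1 d2 (X : measurableType d1) (Y : measurableType d2)
  (pi : {measure set (X*Y)%type -> \bar R}) B : margY pi B = pi (setT `*` B).
Proof. by rewrite setTX. Qed.

Lemma int_margX (R : realType) d1 d2 (X : measurableType d1) (Y : measurableType d2)
  (pi : {measure set (X*Y)%type -> \bar R}) (f : X -> \bar R) :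
  (margX pi).-integrable setT f ->
  pi.-integrable setT (f \o fst) /\ \int[margX pi]_x f x = \int[pi]_z f z.1.
Proof.
move=> intf; have mf : measurable_fun setT f by case/integrableP: intf.
have ip : pi.-integrable setT (f \o fst).
  apply/integrableP; split; first by apply: measurableT_comp.
  case/integrableP: intf => _; apply: le_lt_trans; rewrite le_eqVlt; apply/orP; left; apply/eqP.
  by rewrite /margX [RHS]ge0_integral_pushforward //; apply: measurableT_comp.
split => //; by rewrite /margX integral_pushforward.
Qed.

Lemma int_margY (R : realType) d1 d2 (X : measurableType d1) (Y : measurableType d2)
  (pi : {measure set (X*Y)%type -> \bar R}) (f : Y -> \bar R) :
  (margY pi).-integrable setT f ->
  pi.-integrable setT (f \o snd) /\ \int[margY pi]_x f x = \int[pi]_z f z.2.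
Proof.
move=> intf; have mf : measurable_fun setT f by case/integrableP: intf.
have ip : pi.-integrable setT (f \o snd).
  apply/integrableP; split; first by apply: measurableT_comp.
  case/integrableP: intf => _; apply: le_lt_trans; rewrite le_eqVlt; apply/orP; left; apply/eqP.
  by rewrite /margY [RHS]ge0_integral_pushforward //; apply: measurableT_comp.
split => //; by rewrite /margY integral_pushforward.
Qed.

Theorem proposition2p1 (R : realType)
  (X Y : completePseudoMetricType R) (hX : polish X) (hY : polish Y)
  (mu : probability (Borel X) R) (nu : probability (Borel Y) R)
  (c : (Borel X * Borel Y)%type -> \bar R)
  (mc : measurable_fun setT c) (c0 : forall z, 0 <= c z) :
  Dual mu nu c <= Prel mu nu c.
Proof.
rewrite /Dual /Prel.
set F := fun eps => Peps mu nu c eps.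
have cvgF : cvg (F eps @[eps --> (0:R)^'+]).
  apply: nonincreasing_at_right_is_cvge; apply: nearW => b x y _ _ xy.
  apply/ereal_infP => _ [pi [pm [pX pY]] <-]; apply: ereal_inf_lbound.
  exists pi => //; split => //; apply: le_trans pm; rewrite lee_fin; lra.
apply: ge_ereal_sup => _ [phi [psi [[iphi phinoo] [ipsi psinoo] hc ->]]].
have mu1 : mu setT = 1 := probability_setT mu.
have nu1 : nu setT = 1 := probability_setT nu.
apply/lee_addgt0Pr => dl dl0.
have dl4 : (0 < dl / 4)%R by lra.
have [M1 [M10 HM1]] := @marg_main _ _ _ mu mu1 phi _ dl4 iphi phinoo.
have [M2 [M20 HM2]] := @marg_main _ _ _ nu nu1 psi _ dl4 ipsi psinoo.
have fphi := integrable_fin_num measurableT iphi.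
have fpsi := integrable_fin_num measurableT ipsi.
rewrite -leeBlDr //; apply: lime_ge => //.
have K0 : (0 < dl / (4 * (M1 + M2 + 1)))%R by apply: divr_gt0 => //; lra.
near=> eps.
have e0 : (0 < eps)%R by near: eps; exact: nbhs_right_gt.
have e1 : (eps < dl / (4 * (M1 + M2 + 1)))%R by near: eps; exact: nbhs_right_lt.
have eM : ((M1 + M2) * eps <= dl / 4)%R.
  have : (eps * (4 * (M1 + M2 + 1)) < dl)%R by rewrite -ltr_pdivlMr //; lra.
  nra.
apply/ereal_infP => _ [pi [pm [pX pY]] <-].
have mX : forall A, measurable A -> margX pi A <= mu A by move=> A mA; rewrite margXE pX.
have mY : forall B, measurable B -> margY pi B <= nu B by move=> B mB; rewrite margYE pY.
have [iX bX] := HM1 (margX pi) eps mX pm.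
have [iY bY] := HM2 (margY pi) eps mY pm.
have [iX' eX] := @int_margX _ _ _ _ _ pi phi iX.
have [iY' eY] := @int_margY _ _ _ _ _ pi psi iY.
have [cinf|cfin] := eqVneq (\int[pi]_z c z) +oo; first by rewrite cinf leey.
have ic : pi.-integrable setT c.
  apply/integrableP; split => //.
  under eq_integral do rewrite gee0_abs//.
  by rewrite ltey.
have le1 : \int[pi]_z (phi z.1 + psi z.2) <= \int[pi]_z c z.
  apply: le_integral => //; first exact: integrableD.
  by move=> [x y] _; exact: hc.
apply: le_trans le1; rewrite integralD //.
rewrite -eX -eY.
apply: le_trans (leeD bX bY).
move: fphi fpsi => /fineK <- /fineK <-.
rewrite -!EFinB -!EFinD lee_fin; nra.
Unshelve. all: by end_near.
Qed.
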